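(* Let $H_1,H_2\in(0,1)$ and let $B^1_{H_1},B^2_{H_2}$ be independent fractional Brownian motions. The process $B^1_{H_1}(|B^2_{H_2}(t)|^{1/H_1})$, $t>0$, has density $$q(x,t)=\frac{1}{\pi t^{H_2}}K_0\!\left(\frac{|x|}{t^{H_2}}\right),\qquad x\neq0,$$ and $q$ satisfies $$\frac{\partial q}{\partial t}=-H_2\,t^{2H_2-1}\left(2\frac{\partial^2q}{\partial x^2}+x\frac{\partial^3 q}{\partial x^3}\right),\qquad x\neq0,\ t>0.$$
   Context: A fractional Brownian motion $B_H$ with Hurst index $H\in(0,1)$ is a centered Gaussian process with covariance $\frac12(|t|^{2H}+|s|^{2H}-|t-s|^{2H})$; in particular $B_H(t)\sim N(0,t^{2H})$. For independent processes $X$ and $Y\ge0$, $X(Y(t))$ has density $\int_0^\infty f_X(x,s)f_Y(s,t)ds$. $K_0$ is the modified Bessel function of the second kind of order 0. *)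

(* Defs.v *)
From Stdlib Require Import Reals Lra ClassicalEpsilon.
Open Scope R_scope.

Definition gauss (v x : R) : R := / sqrt (2 * PI * v) * exp (- (x * x) / (2 * v)).

Lemma gauss_cont (v : R) : continuity (gauss v).
Proof.
  intro x; unfold gauss.
  apply continuity_pt_mult; [apply continuity_pt_const; intros ? ?; reflexivity|].
  apply (continuity_pt_comp (fun y => - (y * y) / (2 * v)) exp).
  - unfold Rdiv. apply continuity_pt_mult.
    + apply continuity_pt_opp, continuity_pt_mult; apply derivable_continuous_pt, derivable_pt_id.
    + apply continuity_pt_const; intros ? ?; reflexivity.
  - apply derivable_continuous_pt, derivable_pt_exp.
Qed.

Definition gauss_RI (v a b : R) (h : a <= b) : Riemann_integrable (gauss v) a b :=
  @continuity_implies_RiemannInt (gauss v) a b h (fun x _ => gauss_cont v x).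

Definition gauss_int (v a b : R) : R :=
  match Rle_dec a b with
  | left h => RiemannInt (gauss_RI v a b h)
  | right h => - RiemannInt (gauss_RI v b a (Rlt_le b a (Rnot_le_lt a b h)))
  end.

(* density of B_H(s) ~ N(0, s^{2H}) at x, for s > 0 *)
Definition fbm_density (H s x : R) : R := gauss (Rpower s (2 * H)) x.

(* CDF of Y(t) = |B^2_{H2}(t)|^{1/H1} at s > 0:
   P(|B^2(t)| <= s^{H1}) = int_{-s^{H1}}^{s^{H1}} density of N(0,t^{2 H2}) *)
Definition cdf_Y (H1 H2 t s : R) : R :=
  gauss_int (Rpower t (2 * H2)) (- Rpower s H1) (Rpower s H1).

Definition int_0_inf (f : R -> R) (l : R) : Prop :=
  (forall a b, 0 < a -> a <= b -> inhabited (Riemann_integrable f a b)) /\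
  (forall eps, 0 < eps -> exists d, 0 < d /\ exists M, 0 < M /\
     forall a b (pr : Riemann_integrable f a b),
       0 < a -> a < d -> M < b -> Rabs (RiemannInt pr - l) < eps).

Definition K0 (z : R) : R :=
  epsilon (inhabits 0) (fun l => int_0_inf (fun u => exp (- z * cosh u)) l).

Definition q (H2 x t : R) : R :=
  / (PI * Rpower t H2) * K0 (Rabs x / Rpower t H2).

(* Main.v *)
Require Import Defs.
From Stdlib Require Import Reals Lra Psatz ClassicalEpsilon Classical FunctionalExtensionality.
Open Scope R_scope.

Lemma abs_le_inv a b : Rabs a <= b -> -b <= a <= b.
Proof. unfold Rabs; destruct (Rcase_abs a); lra. Qed.

Lemma D_eqv f x l l' : derivable_pt_lim f x l -> l = l' -> derivable_pt_lim f x l'.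
Proof. intros H ->; exact H. Qed.

Lemma D_ext f g x l : (forall y, f y = g y) -> derivable_pt_lim f x l -> derivable_pt_lim g x l.
Proof. intros; eapply derivable_pt_lim_ext; eauto. Qed.

Lemma D_const a x : derivable_pt_lim (fun _ => a) x 0.
Proof. apply derivable_pt_lim_const. Qed.

Lemma D_id x : derivable_pt_lim (fun y => y) x 1.
Proof. apply derivable_pt_lim_id. Qed.

Lemma D_plus f g x a b : derivable_pt_lim f x a -> derivable_pt_lim g x b ->
  derivable_pt_lim (fun y => f y + g y) x (a + b).
Proof. intros; apply (derivable_pt_lim_plus f g); auto. Qed.

Lemma D_minus f g x a b : derivable_pt_lim f x a -> derivable_pt_lim g x b ->
  derivable_pt_lim (fun y => f y - g y) x (a - b).
Proof. intros; apply (derivable_pt_lim_minus f g); auto. Qed.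

Lemma D_mult f g x a b : derivable_pt_lim f x a -> derivable_pt_lim g x b ->
  derivable_pt_lim (fun y => f y * g y) x (a * g x + f x * b).
Proof. intros; apply (derivable_pt_lim_mult f g); auto. Qed.

Lemma D_comp f g x a b : derivable_pt_lim f x a -> derivable_pt_lim g (f x) b ->
  derivable_pt_lim (fun y => g (f y)) x (b * a).
Proof. intros; apply (derivable_pt_lim_comp f g); auto. Qed.

Lemma D_exp f x a : derivable_pt_lim f x a ->
  derivable_pt_lim (fun y => exp (f y)) x (exp (f x) * a).
Proof. intros; apply D_comp; auto; apply derivable_pt_lim_exp. Qed.

Lemma D_inv f x a : derivable_pt_lim f x a -> f x <> 0 ->
  derivable_pt_lim (fun y => / f y) x (- a / (f x * f x)).
Proof.
  intros H Hn. eapply D_ext with (f := ((fun _ => 1) / f)%F).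
  { intros y; unfold div_fct, Rdiv; ring. }
  eapply D_eqv. apply derivable_pt_lim_div. apply D_const. exact H. exact Hn.
  unfold Rsqr; field; auto.
Qed.

Lemma D_ln f x a : derivable_pt_lim f x a -> 0 < f x ->
  derivable_pt_lim (fun y => ln (f y)) x (a / f x).
Proof. intros; eapply D_eqv. apply D_comp; eauto. apply derivable_pt_lim_ln; auto.
  unfold Rdiv; ring. Qed.

Lemma D_loc f g x l d : 0 < d -> (forall y, Rabs (y - x) < d -> f y = g y) ->
  derivable_pt_lim g x l -> derivable_pt_lim f x l.
Proof.
  intros Hd Heq Hg eps He. destruct (Hg eps He) as [del Hdel].
  assert (Hm: 0 < Rmin del d) by (apply Rmin_pos; [apply del|lra]).
  exists (mkposreal _ Hm). intros h Hh0 Hh. simpl in Hh.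
  assert (Hh1 : Rabs h < del) by (eapply Rlt_le_trans; [exact Hh| apply Rmin_l]).
  assert (Hh2 : Rabs h < d) by (eapply Rlt_le_trans; [exact Hh| apply Rmin_r]).
  rewrite (Heq (x+h)), (Heq x). apply Hdel; auto.
  rewrite Rminus_diag, Rabs_R0; lra.
  replace (x+h-x) with h by ring; auto.
Qed.

Lemma D_cont f x l : derivable_pt_lim f x l ->
  forall eps, 0 < eps -> exists d, 0 < d /\ forall y, Rabs (y - x) < d -> Rabs (f y - f x) < eps.
Proof.
  intros H eps He. destruct (H 1 Rlt_0_1) as [del Hdel].
  set (K := Rabs l + 1).
  assert (HK : 0 < K) by (unfold K; pose proof (Rabs_pos l); lra).
  exists (Rmin del (eps / K)). split.
  { apply Rmin_pos. apply del. apply Rdiv_lt_0_compat; lra. }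
  intros y Hy. destruct (Req_dec y x) as [->|Hne].
  { rewrite Rminus_diag, Rabs_R0; lra. }
  set (h := y - x). assert (Hh0 : h <> 0) by (unfold h; lra).
  assert (Hh : Rabs h < del) by (eapply Rlt_le_trans; [exact Hy| apply Rmin_l]).
  assert (Hh2 : Rabs h < eps / K) by (eapply Rlt_le_trans; [exact Hy| apply Rmin_r]).
  specialize (Hdel h Hh0 Hh). replace (x + h) with y in Hdel by (unfold h; ring).
  assert (E: f y - f x = ((f y - f x)/h - l) * h + l * h) by (field; auto).
  rewrite E. eapply Rle_lt_trans. apply Rabs_triang. rewrite !Rabs_mult.
  assert (Rabs h * K < eps).
  { apply (Rmult_lt_compat_r K) in Hh2; auto. unfold Rdiv in Hh2.
    rewrite Rmult_assoc, Rinv_l in Hh2; lra. }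
  unfold K in *. pose proof (Rabs_pos h). pose proof (Rabs_pos l). nra.
Qed.

Lemma cont_of_D f (f' : R -> R) : (forall x, derivable_pt_lim f x (f' x)) -> continuity f.
Proof. intros H x. apply derivable_continuous_pt. exists (f' x). apply H. Qed.

Definition Int (g : R -> R) (a b : R) : R :=
  epsilon (inhabits 0) (fun l => exists pr : Riemann_integrable g a b, RiemannInt pr = l).

Lemma Int_eq g a b (pr : Riemann_integrable g a b) : RiemannInt pr = Int g a b.
Proof.
  unfold Int.
  assert (Hex: exists l, exists pr : Riemann_integrable g a b, RiemannInt pr = l)
    by (exists (RiemannInt pr); exists pr; reflexivity).
  destruct (epsilon_spec (inhabits 0) _ Hex) as [pr' Hpr']. rewrite <- Hpr'. apply RiemannInt_P5.
Qed.

Lemma cont_RI g a b : continuity g -> Riemann_integrable g a b.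
Proof. intros Hc. destruct (Rle_dec a b) as [h|h].
 - apply continuity_implies_RiemannInt; auto.
 - apply RiemannInt_P1. apply continuity_implies_RiemannInt; [lra|]. intros; apply Hc. Qed.

Lemma Int_aa g a : continuity g -> Int g a a = 0.
Proof. intros Hc. rewrite <- (Int_eq g a a (cont_RI g a a Hc)). apply RiemannInt_P9. Qed.

Lemma Int_chasles g a b c : continuity g -> Int g a b + Int g b c = Int g a c.
Proof. intros Hc. rewrite <- (Int_eq _ _ _ (cont_RI g a b Hc)), <- (Int_eq _ _ _ (cont_RI g b c Hc)),
  <- (Int_eq _ _ _ (cont_RI g a c Hc)). apply RiemannInt_P26. Qed.

Lemma Int_deriv g a x : continuity g -> derivable_pt_lim (fun y => Int g a y) x (g x).
Proof.
  intros Hc. assert (h : x - 1 <= x + 1) by lra.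
  assert (C0 : forall y, x - 1 <= y <= x + 1 -> continuity_pt g y) by (intros; apply Hc).
  pose proof (@RiemannInt_P28 g (x-1) (x+1) x h C0 ltac:(lra)) as HP.
  apply (D_loc _ (fun y => Int g a (x-1) + primitive h (FTC_P1 h C0) y) x _ 1 Rlt_0_1).
  { intros y Hy. apply Rabs_def2 in Hy. unfold primitive.
    destruct (Rle_dec (x-1) y); [|lra]. destruct (Rle_dec y (x+1)); [|lra].
    rewrite Int_eq. rewrite Int_chasles; auto. }
  eapply D_eqv. apply D_plus. apply D_const. exact HP. ring.
Qed.

Lemma FTC g Phi a b : a <= b -> continuity g ->
  (forall c, a <= c <= b -> derivable_pt_lim Phi c (g c)) -> Int g a b = Phi b - Phi a.
Proof.
 intros Hab Hc HP. destruct (Req_dec a b) as [<-|Hne]. { rewrite Int_aa; auto; ring. }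
 destruct (MVT_cor2 (fun y => Int g a y - Phi y) (fun _ => 0) a b) as [c [Hc1 _]]. lra.
 { intros c Hc'. eapply D_eqv. apply D_minus. apply Int_deriv; auto. apply HP; auto. ring. }
 rewrite Int_aa in Hc1; auto. lra.
Qed.

Lemma Int_le g1 g2 a b : a <= b -> continuity g1 -> continuity g2 ->
  (forall u, a <= u <= b -> g1 u <= g2 u) -> Int g1 a b <= Int g2 a b.
Proof.
 intros Hab Hc1 Hc2 Hle. destruct (Req_dec a b) as [<-|Hne]. { rewrite !Int_aa; auto; lra. }
 destruct (MVT_cor2 (fun y => Int g2 a y - Int g1 a y) (fun y => g2 y - g1 y) a b) as [c [Hc Hc']]. lra.
 { intros c Hc'. apply D_minus; apply Int_deriv; auto. }
 rewrite !Int_aa in Hc; auto. specialize (Hle c ltac:(lra)). nra.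
Qed.

Lemma Int_ge0 g a b : a <= b -> continuity g -> (forall u, a <= u <= b -> 0 <= g u) -> 0 <= Int g a b.
Proof.
 intros Hab Hc H. replace 0 with (Int (fun _ => 0) a b).
 apply Int_le; auto. intro; apply continuity_const; intros ? ?; reflexivity.
 rewrite (FTC (fun _ => 0) (fun _ => 0) a b); auto. ring.
 intro; apply continuity_const; intros ? ?; reflexivity. intros; apply D_const.
Qed.

Lemma Int_abs_le g h a b : a <= b -> continuity g -> continuity h ->
  (forall u, a <= u <= b -> Rabs (g u) <= h u) -> Rabs (Int g a b) <= Int h a b.
Proof.
 intros Hab Hg Hh H. apply Rabs_le. split.
 - assert (Int (fun u => - h u) a b <= Int g a b).
   { apply Int_le; auto. apply continuity_opp; auto. intros u Hu. specialize (H u Hu).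
     apply abs_le_inv in H; lra. }
   rewrite (FTC (fun u => - h u) (fun y => - Int h a y)) in H0; auto.
   rewrite Int_aa in H0; auto; lra. apply continuity_opp; auto.
   intros; eapply D_eqv. apply derivable_pt_lim_opp with (f := fun y => Int h a y). apply Int_deriv; auto. reflexivity.
 - apply Int_le; auto. intros u Hu. specialize (H u Hu). apply abs_le_inv in H; lra.
Qed.
Definition limW (F : R -> R) (l : R) : Prop :=
  forall eps, 0 < eps -> exists M, forall W, M < W -> Rabs (F W - l) < eps.

Lemma limW_unique F l1 l2 : limW F l1 -> limW F l2 -> l1 = l2.
Proof.
  intros H1 H2. destruct (Req_dec l1 l2) as [|Hn]; auto.
  assert (He : 0 < Rabs (l1 - l2) / 2) by (apply Rdiv_lt_0_compat; [apply Rabs_pos_lt; lra|lra]).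
  destruct (H1 _ He) as [M1 HM1]. destruct (H2 _ He) as [M2 HM2].
  set (W := Rmax M1 M2 + 1).
  assert (A1 : M1 < W) by (unfold W; pose proof (Rmax_l M1 M2); lra).
  assert (A2 : M2 < W) by (unfold W; pose proof (Rmax_r M1 M2); lra).
  specialize (HM1 W A1). specialize (HM2 W A2).
  assert (Rabs (l1 - l2) <= Rabs (F W - l2) + Rabs (F W - l1)).
  { replace (l1 - l2) with ((F W - l2) + - (F W - l1)) by ring.
    eapply Rle_trans. apply Rabs_triang. rewrite Rabs_Ropp. lra. }
  lra.
Qed.

Lemma limW_const c : limW (fun _ => c) c.
Proof. intros eps He. exists 0. intros. rewrite Rminus_diag, Rabs_R0; auto. Qed.

Lemma limW_plus F G a b : limW F a -> limW G b -> limW (fun W => F W + G W) (a + b).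
Proof.
  intros H1 H2 eps He. destruct (H1 (eps/2) ltac:(lra)) as [M1 HM1].
  destruct (H2 (eps/2) ltac:(lra)) as [M2 HM2]. exists (Rmax M1 M2). intros W HW.
  assert (A1 : M1 < W) by (pose proof (Rmax_l M1 M2); lra).
  assert (A2 : M2 < W) by (pose proof (Rmax_r M1 M2); lra).
  specialize (HM1 W A1). specialize (HM2 W A2).
  replace (F W + G W - (a + b)) with ((F W - a) + (G W - b)) by ring.
  eapply Rle_lt_trans. apply Rabs_triang. lra.
Qed.

Lemma limW_scal F a c : limW F a -> limW (fun W => c * F W) (c * a).
Proof.
  intros H eps He. assert (Hc : 0 < Rabs c + 1) by (pose proof (Rabs_pos c); lra).
  destruct (H (eps / (Rabs c + 1))) as [M HM]. apply Rdiv_lt_0_compat; lra.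
  exists M. intros W HW. specialize (HM W HW).
  replace (c * F W - c * a) with (c * (F W - a)) by ring. rewrite Rabs_mult.
  apply (Rmult_lt_compat_r (Rabs c + 1)) in HM; auto. unfold Rdiv in HM.
  rewrite Rmult_assoc, Rinv_l in HM by lra. pose proof (Rabs_pos c); pose proof (Rabs_pos (F W - a)). nra.
Qed.

Lemma limW_ext F G l : (forall W, 0 < W -> F W = G W) -> limW F l -> limW G l.
Proof.
  intros E H eps He. destruct (H eps He) as [M HM]. exists (Rmax M 0). intros W HW.
  pose proof (Rmax_l M 0); pose proof (Rmax_r M 0).
  rewrite <- E by lra. apply HM; lra.
Qed.

Lemma limW_le F G a b : limW F a -> limW G b -> (forall W, 0 <= W -> F W <= G W) -> a <= b.
Proof.
  intros H1 H2 Hle. destruct (Rle_dec a b) as [|Hn]; auto. exfalso.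
  assert (He : 0 < (a - b) / 2) by lra.
  destruct (H1 _ He) as [M1 HM1]. destruct (H2 _ He) as [M2 HM2].
  set (W := Rmax (Rmax M1 M2) 0 + 1).
  pose proof (Rmax_l (Rmax M1 M2) 0); pose proof (Rmax_r (Rmax M1 M2) 0);
  pose proof (Rmax_l M1 M2); pose proof (Rmax_r M1 M2).
  specialize (HM1 W ltac:(unfold W; lra)). specialize (HM2 W ltac:(unfold W; lra)).
  specialize (Hle W ltac:(unfold W; lra)).
  apply Rabs_def2 in HM1; apply Rabs_def2 in HM2. lra.
Qed.

Lemma Int_small g : continuity g ->
  forall eps, 0 < eps -> exists d, 0 < d /\ forall a, Rabs a < d -> Rabs (Int g 0 a) < eps.
Proof.
  intros Hc eps He. destruct (D_cont _ 0 _ (Int_deriv g 0 0 Hc) eps He) as [d [Hd H]].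
  exists d; split; auto. intros a Ha. specialize (H a). rewrite Int_aa in H; auto.
  rewrite !Rminus_0_r in H. auto.
Qed.

Lemma lim_to_int g l : continuity g -> limW (Int g 0) l -> int_0_inf g l.
Proof.
  intros Hc H. split.
  { intros a b _ _. constructor. apply cont_RI; auto. }
  intros eps He. destruct (Int_small g Hc (eps/2) ltac:(lra)) as [d [Hd Hs]].
  destruct (H (eps/2) ltac:(lra)) as [M HM].
  exists d; split; auto. exists (Rmax M 1). split. pose proof (Rmax_r M 1); lra.
  intros a b pr Ha Had Hb. rewrite Int_eq.
  pose proof (Rmax_l M 1).
  specialize (HM b ltac:(lra)). rewrite <- (Int_chasles g 0 a b Hc) in HM.
  specialize (Hs a ltac:(rewrite Rabs_right; lra)).
  replace (Int g a b - l) with ((Int g 0 a + Int g a b - l) - Int g 0 a) by ring.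
  eapply Rle_lt_trans. apply Rabs_triang. rewrite Rabs_Ropp. lra.
Qed.

Lemma int_to_lim g l : continuity g -> int_0_inf g l -> limW (Int g 0) l.
Proof.
  intros Hc [_ H] eps He. destruct (Int_small g Hc (eps/2) ltac:(lra)) as [d0 [Hd0 Hs]].
  destruct (H (eps/2) ltac:(lra)) as [d [Hd [M [HM HMb]]]].
  exists M. intros W HW.
  set (a := Rmin d d0 / 2).
  assert (Ha : 0 < a) by (unfold a; apply Rdiv_lt_0_compat; [apply Rmin_pos|]; lra).
  assert (Had : a < d) by (unfold a; pose proof (Rmin_l d d0); lra).
  assert (Had0 : a < d0) by (unfold a; pose proof (Rmin_r d d0); lra).
  specialize (HMb a W (cont_RI g a W Hc) Ha Had HW). rewrite Int_eq in HMb.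
  specialize (Hs a ltac:(rewrite Rabs_right; lra)).
  rewrite <- (Int_chasles g 0 a W Hc).
  replace (Int g 0 a + Int g a W - l) with ((Int g a W - l) + Int g 0 a) by ring.
  eapply Rle_lt_trans. apply Rabs_triang. lra.
Qed.

Lemma int_unique g l1 l2 : continuity g -> int_0_inf g l1 -> int_0_inf g l2 -> l1 = l2.
Proof. intros Hc H1 H2. eapply limW_unique; apply int_to_lim; eauto. Qed.

Lemma Int_mono g W0 W : continuity g -> (forall u, 0 <= u -> 0 <= g u) -> 0 <= W0 <= W ->
  Int g 0 W0 <= Int g 0 W.
Proof.
  intros Hc Hp HW. rewrite <- (Int_chasles g 0 W0 W Hc).
  assert (0 <= Int g W0 W) by (apply Int_ge0; [lra|auto|intros; apply Hp; lra]). lra.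
Qed.

Lemma lim_exists g B : continuity g -> (forall u, 0 <= u -> 0 <= g u) ->
  (forall W, 0 <= W -> Int g 0 W <= B) -> exists l, limW (Int g 0) l.
Proof.
  intros Hc Hp HB.
  set (E := fun y => exists W, 0 <= W /\ y = Int g 0 W).
  assert (Hb : bound E) by (exists B; intros y [W [HW ->]]; auto).
  assert (Hne : exists y, E y) by (exists (Int g 0 0); exists 0; split; [lra|auto]).
  destruct (completeness E Hb Hne) as [m [Hub Hleast]].
  exists m. intros eps He.
  assert (Hex : exists W, 0 <= W /\ m - eps < Int g 0 W).
  { apply NNPP; intro Hn. assert (is_upper_bound E (m - eps)).
    { intros y [W [HW ->]]. apply Rnot_lt_le. intro. apply Hn. exists W; auto. }
    specialize (Hleast _ H). lra. }
  destruct Hex as [W0 [HW0 Hlt]]. exists W0. intros W HW.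
  assert (Int g 0 W0 <= Int g 0 W) by (apply Int_mono; auto; lra).
  assert (Int g 0 W <= m) by (apply Hub; exists W; split; [lra|auto]).
  apply Rabs_def1; lra.
Qed.
Lemma exp_le x y : x <= y -> exp x <= exp y.
Proof. intros [H| ->]; [left; apply exp_increasing; auto | right; reflexivity]. Qed.

Lemma exp_pow_n v n : exp v ^ n = exp (INR n * v).
Proof. induction n. simpl; rewrite Rmult_0_l, exp_0; auto.
  simpl pow. rewrite IHn, <- exp_plus, S_INR. f_equal; ring. Qed.

Lemma exp_opp_mul x : exp x * exp (- x) = 1.
Proof. rewrite <- exp_plus, Rplus_opp_r, exp_0; auto. Qed.

Lemma D_scal f x a c : derivable_pt_lim f x a -> derivable_pt_lim (fun y => c * f y) x (c * a).
Proof. intros H; eapply D_eqv. apply (D_mult (fun _ => c) f). apply D_const. exact H. ring. Qed.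

Lemma cosh_d x : derivable_pt_lim cosh x (sinh x).
Proof.
  apply D_ext with (f := fun y => (exp y + exp (- y)) * / 2). intros; unfold cosh; auto.
  eapply D_eqv. apply D_mult. apply D_plus. apply derivable_pt_lim_exp.
  apply D_exp. apply derivable_pt_lim_opp with (f := fun y => y). apply D_id. apply D_const.
  unfold sinh; field.
Qed.

Lemma sinh_d x : derivable_pt_lim sinh x (cosh x).
Proof.
  apply D_ext with (f := fun y => (exp y - exp (- y)) * / 2). intros; unfold sinh; auto.
  eapply D_eqv. apply D_mult. apply D_minus. apply derivable_pt_lim_exp.
  apply D_exp. apply derivable_pt_lim_opp with (f := fun y => y). apply D_id. apply D_const.
  unfold cosh; field.
Qed.

Lemma cosh_ge1 x : 1 <= cosh x.
Proof. unfold cosh. pose proof (exp_ineq1_le x). pose proof (exp_ineq1_le (-x)). lra. Qed.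

Lemma cosh_pos x : 0 < cosh x.
Proof. pose proof (cosh_ge1 x); lra. Qed.

Lemma cosh_ge u : 0 <= u -> u <= cosh u.
Proof.
  intros Hu. unfold cosh. pose proof (exp_ineq1_le (u/2)). pose proof (exp_pos (-u)).
  replace (exp u) with (exp (u/2) * exp (u/2)) by (rewrite <- exp_plus; f_equal; lra).
  assert (0 <= 1 + u/2) by lra.
  assert (exp (u/2) * exp (u/2) >= (1 + u/2) * (1 + u/2)) by (apply Rle_ge, Rmult_le_compat; lra).
  assert ((1 + u/2) * (1 + u/2) >= 2 * u) by (pose proof (Rle_0_sqr (1 - u/2)); unfold Rsqr in *; lra). lra.
Qed.

Lemma cosh_sinh x : cosh x * cosh x - sinh x * sinh x = 1.
Proof. unfold cosh, sinh. pose proof (exp_opp_mul x). nra. Qed.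

Lemma sinh_le_cosh x : Rabs (sinh x) <= cosh x.
Proof. unfold sinh, cosh. pose proof (exp_pos x); pose proof (exp_pos (-x)).
  apply Rabs_le; split; lra. Qed.

Lemma C_mult f g : continuity f -> continuity g -> continuity (fun y => f y * g y).
Proof. intros; exact (continuity_mult f g H H0). Qed.

Lemma C_pow f n : continuity f -> continuity (fun y => f y ^ n).
Proof. intros Hf. induction n.
  - simpl. intro; apply continuity_const; intros ? ?; reflexivity.
  - simpl. apply C_mult; auto. Qed.

Lemma cosh_cont : continuity cosh.
Proof. apply (cont_of_D _ sinh); apply cosh_d. Qed.

Lemma expc_d z x : derivable_pt_lim (fun u => exp (- z * cosh u)) x (exp (- z * cosh x) * (- z * sinh x)).
Proof. apply (D_exp (fun u => - z * cosh u)). apply (D_scal cosh). apply cosh_d. Qed.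

Lemma expc_cont z : continuity (fun u => exp (- z * cosh u)).
Proof. eapply cont_of_D. intro; apply expc_d. Qed.

Definition fk (k : nat) (z u : R) : R := (- cosh u) ^ k * exp (- z * cosh u).
Definition pk (m : nat) (e u : R) : R := cosh u ^ m * exp (- e * cosh u).

Lemma fk_cont k z : continuity (fk k z).
Proof. unfold fk. apply C_mult. apply C_pow. apply continuity_opp, cosh_cont. apply expc_cont. Qed.

Lemma pk_cont m e : continuity (pk m e).
Proof. unfold pk. apply C_mult. apply C_pow. apply cosh_cont. apply expc_cont. Qed.

Lemma pk_pos m e u : 0 <= pk m e u.
Proof. unfold pk. apply Rmult_le_pos. apply pow_le. pose proof (cosh_pos u); lra. left; apply exp_pos. Qed.

Lemma fk_pk k z u : fk k z u = (-1) ^ k * pk k z u.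
Proof. unfold fk, pk. replace (- cosh u) with (-1 * cosh u) by ring. rewrite Rpow_mult_distr. ring. Qed.

Definition Cm (m : nat) (e : R) : R := (2 * (INR m + 1) / e) ^ m.

Lemma pow_exp_bound m e c : 0 < e -> 0 <= c -> c ^ m <= Cm m e * exp (e * c / 2).
Proof.
  intros He Hc. unfold Cm. pose proof (pos_INR m) as Hm.
  set (A := 2 * (INR m + 1) / e). set (v := e * c / (2 * (INR m + 1))).
  assert (HA : 0 < A) by (unfold A; apply Rdiv_lt_0_compat; lra).
  assert (Hv : 0 <= v) by (unfold v; apply Rmult_le_pos; [nra| left; apply Rinv_0_lt_compat; lra]).
  assert (Hcv : c = A * v) by (unfold A, v; field; lra).
  assert (Hve : v <= exp v) by (pose proof (exp_ineq1_le v); lra).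
  assert (c ^ m <= (A * exp v) ^ m) by (apply pow_incr; split; auto; rewrite Hcv; nra).
  rewrite Rpow_mult_distr, exp_pow_n in H. eapply Rle_trans. apply H.
  apply Rmult_le_compat_l. apply pow_le; lra. apply exp_le.
  unfold v. replace (INR m * (e * c / (2 * (INR m + 1)))) with ((e * c / 2) * (INR m / (INR m + 1))) by (field; lra).
  assert (INR m / (INR m + 1) <= 1) by (apply (Rmult_le_reg_r (INR m + 1)); [lra|]; field_simplify; lra).
  assert (0 <= e * c / 2) by nra. nra.
Qed.

Lemma Cm_pos m e : 0 < e -> 0 < Cm m e.
Proof. intros. unfold Cm. apply pow_lt. pose proof (pos_INR m). apply Rdiv_lt_0_compat; lra. Qed.

Lemma pk_bound m e u : 0 < e -> 0 <= u -> pk m e u <= Cm m e * exp (- (e / 2) * u).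
Proof.
  intros He Hu. unfold pk. pose proof (cosh_ge u Hu). pose proof (cosh_pos u).
  pose proof (pow_exp_bound m e (cosh u) He ltac:(lra)).
  pose proof (exp_pos (- e * cosh u)).
  eapply Rle_trans. apply Rmult_le_compat_r. lra. apply H1.
  rewrite Rmult_assoc, <- exp_plus. apply Rmult_le_compat_l. left; apply Cm_pos; auto.
  apply exp_le. nra.
Qed.

Lemma expdecay_cont d : continuity (fun u => exp (- d * u)).
Proof. eapply cont_of_D. intro x. apply D_exp. apply D_scal. apply D_id. Qed.

Lemma pk_int_bound m e W : 0 < e -> 0 <= W -> Int (pk m e) 0 W <= Cm m e * (2 / e).
Proof.
  intros He HW. eapply Rle_trans.
  apply (Int_le _ (fun u => Cm m e * exp (- (e/2) * u))); auto. apply pk_cont.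
  apply C_mult. intro; apply continuity_const; intros ? ?; reflexivity. apply expdecay_cont.
  intros u Hu; apply pk_bound; auto; lra.
  rewrite (FTC _ (fun u => - (Cm m e * (2 / e)) * exp (- (e / 2) * u))); auto.
  - rewrite Rmult_0_r, exp_0. pose proof (exp_pos (- (e / 2) * W)). pose proof (Cm_pos m e He).
    assert (0 < Cm m e * (2 / e)) by (apply Rmult_lt_0_compat; auto; apply Rdiv_lt_0_compat; lra). nra.
  - apply C_mult. intro; apply continuity_const; intros ? ?; reflexivity. apply expdecay_cont.
  - intros c _. eapply D_eqv. apply D_scal. apply D_exp. apply D_scal. apply D_id. field. lra.
Qed.

Definition Dk (k : nat) (z : R) : R :=
  epsilon (inhabits 0) (fun l => int_0_inf (fk k z) l).

Lemma Int_scal g c a b : continuity g -> Int (fun u => c * g u) a b = c * Int g a b.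
Proof.
  intros Hc. destruct (Rle_dec a b) as [Hab|Hab].
  - rewrite (FTC _ (fun y => c * Int g a y)); auto. rewrite Int_aa; auto; ring.
    apply C_mult; auto. intro; apply continuity_const; intros ? ?; reflexivity.
    intros; apply D_scal, Int_deriv; auto.
  - assert (Hc' : continuity (fun u => c * g u)).
    { apply C_mult; auto. intro; apply continuity_const; intros ? ?; reflexivity. }
    pose proof (Int_chasles _ a b a Hc'). pose proof (Int_chasles _ a b a Hc).
    rewrite Int_aa in H, H0; auto.
    rewrite (FTC _ (fun y => c * Int g b y) b a) in H; [|lra|auto|intros; apply D_scal, Int_deriv; auto].
    rewrite Int_aa in H; auto. nra.
Qed.

Lemma D_spec k z : 0 < z -> limW (Int (fk k z) 0) (Dk k z).
Proof.
  intros Hz. destruct (lim_exists (pk k z) (Cm k z * (2 / z))) as [l Hl].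
  apply pk_cont. intros; apply pk_pos. intros; apply pk_int_bound; auto.
  assert (Hf : limW (Int (fk k z) 0) ((-1)^k * l)).
  { eapply limW_ext; [| apply limW_scal; exact Hl]. intros W _.
    cbv beta. rewrite <- Int_scal by apply pk_cont. f_equal.
    apply functional_extensionality; intro u; symmetry; apply fk_pk. }
  assert (Hi : int_0_inf (fk k z) (Dk k z)).
  { unfold Dk. apply epsilon_spec. exists ((-1)^k * l). apply lim_to_int; auto. apply fk_cont. }
  apply int_to_lim; auto. apply fk_cont.
Qed.
Lemma exp_taylor y : Rabs (exp y - 1 - y) <= y * y * exp (Rabs y).
Proof.
  pose proof (exp_ineq1_le y) as E1. pose proof (exp_ineq1_le (-y)) as E2.
  pose proof (exp_opp_mul y) as E3. pose proof (exp_pos y). pose proof (exp_pos (-y)).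
  assert (Hle : exp y * (1 - y) <= 1) by (rewrite <- E3; apply Rmult_le_compat_l; lra).
  rewrite Rabs_right by lra.
  destruct (Rle_dec 0 y) as [Hy|Hy].
  - rewrite Rabs_right by lra.
    assert (exp y - 1 - y <= y * (exp y - 1)) by nra.
    assert (exp y - 1 <= y * exp y) by nra. nra.
  - rewrite Rabs_left by lra.
    assert (1 <= exp (- y)) by (pose proof (exp_ineq1_le (-y)); lra).
    assert (exp y - 1 - y <= - y * (1 - exp y)) by nra.
    assert (1 - exp y <= - y) by lra.
    assert (- y * (1 - exp y) <= y * y) by nra. nra.
Qed.

Lemma fk_taylor k z h u : 0 < z -> Rabs h <= z / 2 ->
  Rabs (fk k (z + h) u - fk k z u - h * fk (S k) z u) <= h * h * pk (k + 2) (z / 2) u.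
Proof.
  intros Hz Hh. unfold fk, pk. set (c := cosh u). pose proof (cosh_pos u) as Hc. fold c in Hc.
  set (E := exp (- z * c)).
  assert (EQ : (- c) ^ k * exp (- (z + h) * c) - (- c) ^ k * E - h * ((- c) ^ S k * E)
               = (- c) ^ k * E * (exp (- h * c) - 1 - (- h * c))).
  { unfold E. replace (- (z + h) * c) with (- z * c + - h * c) by ring. rewrite exp_plus. simpl; ring. }
  rewrite EQ. rewrite !Rabs_mult. rewrite <- RPow_abs.
  replace (Rabs (- c)) with c by (rewrite Rabs_Ropp, Rabs_right; lra).
  rewrite (Rabs_right E) by (left; apply exp_pos).
  pose proof (exp_taylor (- h * c)) as T.
  assert (HE : 0 < E) by apply exp_pos.
  assert (Hck : 0 < c ^ k) by (apply pow_lt; lra).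
  eapply Rle_trans. apply Rmult_le_compat_l. apply Rmult_le_pos; lra. exact T.
  replace (Rabs (- h * c)) with (Rabs h * c) by (rewrite Rabs_mult, Rabs_Ropp, (Rabs_right c); lra).
  assert (exp (Rabs h * c) * E <= exp (- (z / 2) * c)).
  { unfold E. rewrite <- exp_plus. apply exp_le. nra. }
  replace (c ^ (k + 2)) with (c ^ k * (c * c)) by (rewrite pow_add; simpl; ring).
  assert (0 <= h * h) by nra.
  replace (c ^ k * E * (- h * c * (- h * c) * exp (Rabs h * c)))
    with ((h * h) * (c ^ k * (c * c)) * (exp (Rabs h * c) * E)) by ring.
  replace (h * h * (c ^ k * (c * c) * exp (- (z / 2) * c)))
    with ((h * h) * (c ^ k * (c * c)) * exp (- (z / 2) * c)) by ring.
  apply Rmult_le_compat_l; auto. apply Rmult_le_pos; auto. nra.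
Qed.

Lemma same_deriv Psi Phi g a b : a <= b ->
  (forall c, a <= c <= b -> derivable_pt_lim Psi c (g c)) ->
  (forall c, a <= c <= b -> derivable_pt_lim Phi c (g c)) -> Psi b - Psi a = Phi b - Phi a.
Proof.
  intros Hab H1 H2. destruct (Req_dec a b) as [<-|Hne]. ring.
  destruct (MVT_cor2 (fun y => Psi y - Phi y) (fun _ => 0) a b) as [c [Hc _]]. lra.
  { intros c Hc. eapply D_eqv. apply D_minus; [apply H1|apply H2]; auto. ring. }
  lra.
Qed.

Lemma D_deriv k z : 0 < z -> derivable_pt_lim (Dk k) z (Dk (S k) z).
Proof.
  intros Hz. set (B := Cm (k + 2) (z / 2) * (2 / (z / 2))).
  assert (HB : 0 < B) by (unfold B; apply Rmult_lt_0_compat; [apply Cm_pos; lra| apply Rdiv_lt_0_compat; lra]).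
  assert (Key : forall h, Rabs h <= z / 2 -> Rabs (Dk k (z + h) - Dk k z - h * Dk (S k) z) <= h * h * B).
  { intros h Hh. assert (Hzh : 0 < z + h) by (apply abs_le_inv in Hh; lra).
    set (F := fun W => Int (fk k (z + h)) 0 W - Int (fk k z) 0 W - h * Int (fk (S k) z) 0 W).
    assert (HF : limW F (Dk k (z + h) - Dk k z - h * Dk (S k) z)).
    { unfold F. replace (Dk k (z + h) - Dk k z - h * Dk (S k) z)
        with ((Dk k (z + h) + (-1) * Dk k z) + (- h) * Dk (S k) z) by ring.
      eapply limW_ext; [| apply limW_plus; [apply limW_plus|apply limW_scal]].
      2: apply D_spec; auto. 2: apply limW_scal; apply D_spec; auto. 2: apply D_spec; auto.
      intros W _. cbv beta. ring. }
    assert (Hb : forall W, 0 <= W -> Rabs (F W) <= h * h * B).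
    { intros W HW. unfold F.
      assert (Hg : continuity (fun u => fk k (z + h) u - fk k z u - h * fk (S k) z u)).
      { apply continuity_minus. apply continuity_minus; apply fk_cont.
        apply C_mult. intro; apply continuity_const; intros ? ?; reflexivity. apply fk_cont. }
      assert (E1 : Int (fk k (z + h)) 0 W - Int (fk k z) 0 W - h * Int (fk (S k) z) 0 W
                   = Int (fun u => fk k (z + h) u - fk k z u - h * fk (S k) z u) 0 W).
      { pose proof (same_deriv (fun W => Int (fk k (z + h)) 0 W - Int (fk k z) 0 W - h * Int (fk (S k) z) 0 W)
          (fun W => Int (fun u => fk k (z + h) u - fk k z u - h * fk (S k) z u) 0 W)
          (fun u => fk k (z + h) u - fk k z u - h * fk (S k) z u) 0 W HW) as SD.
        rewrite !Int_aa in SD by (try apply fk_cont; auto).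
        replace (0 - 0 - h * 0) with 0 in SD by ring. rewrite !Rminus_0_r in SD. apply SD.
        - intros c _. apply D_minus. apply D_minus; apply Int_deriv; apply fk_cont.
          apply (D_scal (fun W => Int (fk (S k) z) 0 W)); apply Int_deriv; apply fk_cont.
        - intros; eapply D_eqv; [apply Int_deriv; auto | reflexivity]. }
      rewrite E1. eapply Rle_trans. apply (Int_abs_le _ (fun u => h * h * pk (k + 2) (z / 2) u)); auto.
      apply C_mult. intro; apply continuity_const; intros ? ?; reflexivity. apply pk_cont.
      intros; apply fk_taylor; auto.
      rewrite Int_scal by apply pk_cont. apply Rmult_le_compat_l. nra. apply pk_int_bound; lra. }
    apply Rabs_le. split.
    - apply (limW_le (fun _ => - (h * h * B)) F); auto. apply limW_const.
      intros W HW. specialize (Hb W HW). apply abs_le_inv in Hb; lra.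
    - apply (limW_le F (fun _ => h * h * B)); auto. apply limW_const.
      intros W HW. specialize (Hb W HW). apply abs_le_inv in Hb; lra. }
  intros eps He.
  assert (Hd : 0 < Rmin (z / 2) (eps / B)) by (apply Rmin_pos; [lra| apply Rdiv_lt_0_compat; lra]).
  exists (mkposreal _ Hd). intros h Hh0 Hh. simpl in Hh.
  assert (Hh1 : Rabs h <= z / 2) by (pose proof (Rmin_l (z/2) (eps/B)); lra).
  assert (Hh2 : Rabs h < eps / B) by (pose proof (Rmin_r (z/2) (eps/B)); lra).
  specialize (Key h Hh1).
  replace ((Dk k (z + h) - Dk k z) / h - Dk (S k) z) with ((Dk k (z + h) - Dk k z - h * Dk (S k) z) / h) by (field; auto).
  unfold Rdiv at 1. rewrite Rabs_mult, Rabs_inv.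
  assert (Hah : 0 < Rabs h) by (apply Rabs_pos_lt; auto).
  apply (Rmult_lt_reg_r (Rabs h)); auto. rewrite Rmult_assoc, Rinv_l, Rmult_1_r by lra.
  assert (h * h = Rabs h * Rabs h) by (rewrite <- Rabs_mult, Rabs_right; [auto| apply Rle_ge; nra]).
  assert (Rabs h * B < eps) by (apply (Rmult_lt_compat_r B) in Hh2; auto; unfold Rdiv in Hh2;
     rewrite Rmult_assoc, Rinv_l in Hh2; lra).
  nra.
Qed.
Lemma decay_lim C d : 0 < d -> limW (fun W => C * exp (- d * W)) 0.
Proof.
  intros Hd eps He. exists (Rabs C / (d * eps)). intros W HW.
  rewrite Rminus_0_r, Rabs_mult, (Rabs_right (exp _)) by (left; apply exp_pos).
  assert (HW0 : 0 <= W) by (eapply Rle_trans; [|left; exact HW];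
    apply Rmult_le_pos; [apply Rabs_pos| left; apply Rinv_0_lt_compat; nra]).
  pose proof (exp_ineq1_le (d * W)). pose proof (exp_opp_mul (d * W)).
  replace (- d * W) with (- (d * W)) by ring.
  assert (Hb : exp (- (d * W)) * (1 + d * W) <= 1) by (rewrite <- H0; rewrite Rmult_comm; apply Rmult_le_compat_r; [left; apply exp_pos| lra]).
  assert (HC : Rabs C < d * eps * W).
  { apply (Rmult_lt_compat_r (d * eps)) in HW; [|nra]. unfold Rdiv in HW.
    rewrite Rmult_assoc, Rinv_l in HW by nra. lra. }
  pose proof (exp_pos (- (d * W))). pose proof (Rabs_pos C).
  assert (Rabs C * exp (- (d * W)) * (1 + d * W) < eps * (1 + d * W)) by nra. nra.
Qed.

Lemma bessel k z : k = 0%nat -> 0 < z -> Dk 0 z + z * Dk 1 z - 2 * Dk 2 z - z * Dk 3 z = 0.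
Proof.
  intros _ Hz.
  set (Phi := fun u => - (sinh u * cosh u * exp (- z * cosh u))).
  set (F := fun W => Int (fk 0 z) 0 W + z * Int (fk 1 z) 0 W + (-2) * Int (fk 2 z) 0 W + (- z) * Int (fk 3 z) 0 W).
  assert (HF1 : limW F (Dk 0 z + z * Dk 1 z + (-2) * Dk 2 z + (- z) * Dk 3 z)).
  { unfold F. repeat apply limW_plus; try apply limW_scal; apply D_spec; auto. }
  assert (HF2 : limW F 0).
  { apply (limW_ext (fun W => Phi W)).
    - intros W HW. unfold F. symmetry.
      assert (D1 : forall c, 0 <= c <= W -> derivable_pt_lim (fun W => Int (fk 0 z) 0 W + z * Int (fk 1 z) 0 W + (-2) * Int (fk 2 z) 0 W + (- z) * Int (fk 3 z) 0 W) c
          (fk 0 z c + z * fk 1 z c + (-2) * fk 2 z c + (- z) * fk 3 z c)).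
      { intros c _. repeat apply D_plus; try apply D_scal; apply Int_deriv; apply fk_cont. }
      assert (D2 : forall c, 0 <= c <= W -> derivable_pt_lim Phi c
          (fk 0 z c + z * fk 1 z c + (-2) * fk 2 z c + (- z) * fk 3 z c)).
      { intros c _. unfold Phi. eapply D_eqv.
        apply derivable_pt_lim_opp with (f := fun u => sinh u * cosh u * exp (- z * cosh u)).
        apply D_mult. apply D_mult. apply sinh_d. apply cosh_d. apply expc_d.
        unfold fk. simpl. pose proof (cosh_sinh c) as Hs.
        apply Rminus_diag_uniq.
        transitivity (exp (- z * cosh c) * (z * cosh c - 1) * (sinh c * sinh c - cosh c * cosh c + 1)).
        ring. replace (sinh c * sinh c - cosh c * cosh c + 1) with 0 by lra. ring. }
      pose proof (same_deriv _ _ _ 0 W ltac:(lra) D1 D2) as SD.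
      cbv beta in SD. rewrite !Int_aa in SD by apply fk_cont.
      assert (Phi 0 = 0) by (unfold Phi; rewrite sinh_0; ring).
      rewrite H in SD. ring_simplify in SD. lra.
    - intros eps He. destruct (decay_lim (Cm 2 z) (z / 2) ltac:(lra) eps He) as [M HM].
      exists (Rmax M 0). intros W HW. pose proof (Rmax_l M 0); pose proof (Rmax_r M 0).
      eapply Rle_lt_trans; [| apply (HM W); lra].
      rewrite !Rminus_0_r. rewrite (Rabs_right (Cm 2 z * _)).
      2: { apply Rle_ge, Rmult_le_pos. left; apply Cm_pos; auto. left; apply exp_pos. }
      eapply Rle_trans; [| apply (pk_bound 2 z W); lra]. unfold Phi, pk. rewrite Rabs_Ropp.
      rewrite !Rabs_mult. rewrite (Rabs_right (cosh W)) by (left; apply cosh_pos).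
      rewrite (Rabs_right (exp _)) by (left; apply exp_pos).
      pose proof (sinh_le_cosh W). pose proof (cosh_pos W). pose proof (exp_pos (- z * cosh W)).
      simpl. apply Rmult_le_compat_r. lra. rewrite Rmult_1_r. apply Rmult_le_compat_r; lra. }
  pose proof (limW_unique _ _ _ HF1 HF2). lra.
Qed.

Lemma K0_D0 z : 0 < z -> K0 z = Dk 0 z.
Proof.
  intros Hz. assert (E : fk 0 z = fun u => exp (- z * cosh u)).
  { apply functional_extensionality; intro u; unfold fk; simpl; ring. }
  assert (H1 : int_0_inf (fun u => exp (- z * cosh u)) (Dk 0 z)).
  { rewrite <- E. apply lim_to_int. apply fk_cont. apply D_spec; auto. }
  assert (H2 : int_0_inf (fun u => exp (- z * cosh u)) (K0 z)).
  { unfold K0. apply epsilon_spec. exists (Dk 0 z). auto. }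
  eapply int_unique; eauto. apply expc_cont.
Qed.
Definition sg (x : R) : R := if Rle_dec 0 x then 1 else -1.

Lemma sg_loc e y : (e = 1 \/ e = -1) -> 0 < e * y -> sg y = e /\ Rabs y = e * y.
Proof.
  intros [-> | ->] H; unfold sg.
  - destruct (Rle_dec 0 y); [|lra]. split; auto. rewrite Rabs_right; lra.
  - destruct (Rle_dec 0 y); [lra|]. split; auto. rewrite Rabs_left; lra.
Qed.

Lemma sg_of x : x <> 0 -> exists e, (e = 1 \/ e = -1) /\ 0 < e * x /\ sg x = e /\ Rabs x = e * x.
Proof.
  intros Hx. destruct (Rlt_dec 0 x).
  - exists 1. assert (0 < 1 * x) by lra. split; [auto|]. split; auto. apply sg_loc; auto.
  - exists (-1). assert (0 < -1 * x) by lra. split; [auto|]. split; auto. apply sg_loc; auto.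
Qed.

Lemma Dloc_x k A e x s G l : 0 < s -> (e = 1 \/ e = -1) -> 0 < e * x ->
  (forall y, 0 < e * y -> G y = A * Dk k (e * y / s)) ->
  l = A * (Dk (S k) (e * x / s) * (e / s)) -> derivable_pt_lim G x l.
Proof.
  intros Hs He Hx HG ->.
  apply (D_loc _ (fun y => A * Dk k (e * y / s)) x _ (Rabs x)).
  { apply Rabs_pos_lt. intro; subst; lra. }
  { intros y Hy. apply HG. destruct He as [-> | ->].
    - rewrite (Rabs_right x) in Hy by lra. apply Rabs_def2 in Hy. lra.
    - rewrite (Rabs_left x) in Hy by lra. apply Rabs_def2 in Hy. lra. }
  apply D_scal. apply (D_comp (fun y => e * y / s) (Dk k)).
  - apply D_ext with (f := fun y => (e / s) * y). intro; unfold Rdiv; ring.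
    eapply D_eqv. apply D_scal. apply D_id. ring.
  - apply D_deriv. apply Rdiv_lt_0_compat; auto.
Qed.

Definition sig (H2 t : R) := Rpower t H2.
Definition qx (H2 x t : R) := sg x * (/ (PI * sig H2 t) * (Dk 1 (Rabs x / sig H2 t) * / sig H2 t)).
Definition qxx (H2 x t : R) := / (PI * sig H2 t) * (Dk 2 (Rabs x / sig H2 t) * / (sig H2 t * sig H2 t)).
Definition qxxx (H2 x t : R) := sg x * (/ (PI * sig H2 t) * (Dk 3 (Rabs x / sig H2 t) * / (sig H2 t * sig H2 t * sig H2 t))).
Definition qt (H2 x t : R) :=
  (- (PI * (H2 * Rpower t (H2 - 1))) / ((PI * sig H2 t) * (PI * sig H2 t))) * Dk 0 (Rabs x / sig H2 t)
  + / (PI * sig H2 t) * (Dk 1 (Rabs x / sig H2 t) * (Rabs x * (- (H2 * Rpower t (H2 - 1)) / (sig H2 t * sig H2 t)))).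

Lemma sig_pos H2 t : 0 < sig H2 t.
Proof. unfold sig, Rpower; apply exp_pos. Qed.

Lemma part2 H2 : 0 < H2 < 1 ->
  forall x t : R, x <> 0 -> 0 < t ->
       derivable_pt_lim (fun y => q H2 y t) x (qx H2 x t) /\
       derivable_pt_lim (fun y => qx H2 y t) x (qxx H2 x t) /\
       derivable_pt_lim (fun y => qxx H2 y t) x (qxxx H2 x t) /\
       derivable_pt_lim (fun s => q H2 x s) t (qt H2 x t) /\
       qt H2 x t = - H2 * Rpower t (2 * H2 - 1) * (2 * qxx H2 x t + x * qxxx H2 x t).
Proof.
  intros HH x t Hx Ht. pose proof (sig_pos H2 t) as Hs. set (s := sig H2 t) in *.
  assert (HPI : 0 < PI) by apply PI_RGT_0.
  destruct (sg_of x Hx) as [e [He [Hex [Hsg Hab]]]].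
  assert (Hee : e * e = 1) by (destruct He; subst; ring).
  split; [|split; [|split; [|split]]].
  - apply (Dloc_x 0 (/ (PI * s)) e x s); auto.
    + intros y Hy. destruct (sg_loc e y He Hy) as [_ Hay]. unfold q. fold (sig H2 t). fold s.
      rewrite Hay. rewrite K0_D0; auto. apply Rdiv_lt_0_compat; auto.
    + unfold qx. fold s. rewrite Hsg, Hab. field. lra.
  - apply (Dloc_x 1 (e * / (PI * s) * / s) e x s); auto.
    + intros y Hy. destruct (sg_loc e y He Hy) as [Hsy Hay]. unfold qx. fold s.
      rewrite Hay, Hsy. ring.
    + unfold qxx. fold s. rewrite Hab. replace (e * / (PI * s) * / s * (Dk 2 (e * x / s) * (e / s))) with ((e * e) * (/ (PI * s) * / s * (Dk 2 (e * x / s) * / s))) by (unfold Rdiv; ring). rewrite Hee. field. lra.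
  - apply (Dloc_x 2 (/ (PI * s) * / (s * s)) e x s); auto.
    + intros y Hy. destruct (sg_loc e y He Hy) as [Hsy Hay]. unfold qxx. fold s.
      rewrite Hay. ring.
    + unfold qxxx. fold s. rewrite Hsg, Hab. field. lra.
  - apply (D_loc _ (fun r => / (PI * sig H2 r) * Dk 0 (Rabs x / sig H2 r)) t _ t Ht).
    { intros r Hr. apply Rabs_def2 in Hr. unfold q. fold (sig H2 r). rewrite K0_D0; auto.
      apply Rdiv_lt_0_compat. apply Rabs_pos_lt; auto. apply sig_pos. }
    unfold qt. fold s.
    assert (Hsd : derivable_pt_lim (sig H2) t (H2 * Rpower t (H2 - 1))).
    { unfold sig. apply derivable_pt_lim_power; auto. }
    eapply D_eqv. apply D_mult.
    + apply (D_inv (fun r => PI * sig H2 r)). apply D_scal. exact Hsd.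
      fold s. nra.
    + apply (D_comp (fun r => Rabs x / sig H2 r) (Dk 0)).
      * apply D_ext with (f := fun r => Rabs x * / sig H2 r). intro; unfold Rdiv; auto.
        apply D_scal. apply (D_inv (sig H2)). exact Hsd. fold s; lra.
      * apply D_deriv. fold s. apply Rdiv_lt_0_compat; auto. apply Rabs_pos_lt; auto.
    + unfold s. unfold Rdiv. ring.
  - unfold qt, qxx, qxxx. fold s.
    pose proof (bessel 0 (Rabs x / s) eq_refl ltac:(apply Rdiv_lt_0_compat; auto; apply Rabs_pos_lt; auto)) as HB.
    assert (Hp : Rpower t (2 * H2 - 1) = Rpower t (H2 - 1) * s).
    { unfold s, sig. rewrite <- Rpower_plus. f_equal; ring. }
    rewrite Hp, Hsg.
    assert (Hxe : x * e = Rabs x) by (rewrite Hab; ring).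
    set (P := Rpower t (H2 - 1)). set (z := Rabs x / s) in *.
    set (D0 := Dk 0 z) in *. set (D1 := Dk 1 z) in *. set (D2 := Dk 2 z) in *. set (D3 := Dk 3 z) in *.
    replace D0 with (2 * D2 + z * D3 - z * D1) by lra.
    replace (x * (e * (/ (PI * s) * (D3 * / (s * s * s))))) with (Rabs x * (/ (PI * s) * (D3 * / (s * s * s)))) by (rewrite <- Hxe; ring).
    unfold z. field. split; lra.
Qed.
Lemma Int_rev g a b : continuity g -> Int g a b = - Int g b a.
Proof. intros Hc. pose proof (Int_chasles g a b a Hc). rewrite Int_aa in H; auto. lra. Qed.

Lemma gauss_int_Int v a b : gauss_int v a b = Int (gauss v) a b.
Proof.
  unfold gauss_int. destruct (Rle_dec a b).
  - apply Int_eq.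
  - rewrite Int_eq. rewrite (Int_rev (gauss v) a b) by apply gauss_cont. auto.
Qed.

Lemma gauss_even v x : gauss v (- x) = gauss v x.
Proof. unfold gauss. replace (- x * - x) with (x * x) by ring. auto. Qed.

Lemma Rpower_pos a b : 0 < Rpower a b.
Proof. unfold Rpower; apply exp_pos. Qed.

Lemma cdf_deriv H1 H2 t s : 0 < s ->
  derivable_pt_lim (cdf_Y H1 H2 t) s
    (2 * H1 * Rpower s (H1 - 1) * gauss (Rpower t (2 * H2)) (Rpower s H1)).
Proof.
  intros Hs. set (g := gauss (Rpower t (2 * H2))).
  assert (Hg : continuity g) by apply gauss_cont.
  apply D_ext with (f := fun s => Int g 0 (Rpower s H1) - Int g 0 (- Rpower s H1)).
  { intro y. unfold cdf_Y. rewrite gauss_int_Int. fold g.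
    rewrite <- (Int_chasles g (- Rpower y H1) 0 (Rpower y H1) Hg).
    rewrite (Int_rev g (- Rpower y H1) 0 Hg). ring. }
  eapply D_eqv. apply D_minus.
  - apply (D_comp (fun y => Rpower y H1) (fun y => Int g 0 y)).
    apply derivable_pt_lim_power; auto. apply Int_deriv; auto.
  - apply (D_comp (fun y => - Rpower y H1) (fun y => Int g 0 y)).
    apply derivable_pt_lim_opp with (f := fun y => Rpower y H1).
    apply derivable_pt_lim_power; auto. apply Int_deriv; auto.
  - unfold g. rewrite gauss_even. ring.
Qed.

Section P1.
Variables (H1 H2 t x : R).
Hypotheses (HH1 : 0 < H1) (Ht : 0 < t) (Hx : x <> 0).

Let sg2 := Rpower t H2.
Let A := / (2 * PI * sg2).
Let k := Rabs x / sg2.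
Let L := ln (Rabs x * sg2).
Definition wf (s : R) := 2 * H1 * ln s - ln (Rabs x * Rpower t H2).
Definition k0 (u : R) := exp (- (Rabs x / Rpower t H2) * cosh u).
Definition Fexpl (s : R) := / (2 * PI * Rpower t H2) * (k0 (wf s) * (2 * H1 * / s)).

Lemma algebra_i s : 0 < s ->
  gauss (Rpower s (2 * H1)) x * (2 * H1 * Rpower s (H1 - 1) * gauss (Rpower t (2 * H2)) (Rpower s H1))
  = Fexpl s.
Proof.
  intros Hs. unfold Fexpl, k0, wf, gauss.
  set (R := Rpower s H1). set (sg := Rpower t H2).
  assert (HR : 0 < R) by apply Rpower_pos. assert (Hsg : 0 < sg) by apply Rpower_pos.
  assert (HPI : 0 < PI) by apply PI_RGT_0.
  assert (HS : Rpower s (2 * H1) = R * R) by (unfold R; rewrite <- Rpower_plus; f_equal; ring).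
  assert (Hv : Rpower t (2 * H2) = sg * sg) by (unfold sg; rewrite <- Rpower_plus; f_equal; ring).
  assert (HP : Rpower s (H1 - 1) = R * / s).
  { unfold R. unfold Rminus. rewrite Rpower_plus, Rpower_Ropp, Rpower_1; auto. }
  assert (Hax : 0 < Rabs x) by (apply Rabs_pos_lt; auto).
  assert (Hxx : Rabs x * Rabs x = x * x).
  { pose proof (Rsqr_abs x). unfold Rsqr in H. lra. }
  assert (Hew : exp (2 * H1 * ln s - ln (Rabs x * sg)) = R * R / (Rabs x * sg)).
  { unfold Rminus. rewrite exp_plus, exp_Ropp, exp_ln by nra.
    replace (exp (2 * H1 * ln s)) with (Rpower s (2 * H1)) by reflexivity. rewrite HS. field; lra. }
  assert (Hc : Rabs x / sg * cosh (2 * H1 * ln s - ln (Rabs x * sg))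
               = x * x / (2 * (R * R)) + R * R / (2 * (sg * sg))).
  { unfold cosh. rewrite exp_Ropp, Hew. rewrite <- Hxx. field. split; lra. }
  rewrite HS, Hv, HP.
  rewrite (sqrt_mult (2 * PI) (R * R)) by nra. rewrite (sqrt_mult (2 * PI) (sg * sg)) by nra.
  rewrite (sqrt_square R), (sqrt_square sg) by lra.
  assert (Hq : 0 < sqrt (2 * PI)) by (apply sqrt_lt_R0; lra).
  assert (Hq2 : sqrt (2 * PI) * sqrt (2 * PI) = 2 * PI) by (apply sqrt_def; lra).
  assert (Hc2 : - (Rabs x / sg) * cosh (2 * H1 * ln s - ln (Rabs x * sg)) = (- (x * x) / (2 * (R * R)) + - (R * R) / (2 * (sg * sg)))).
  { rewrite Ropp_mult_distr_l_reverse. rewrite Hc. field. split; lra. }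
  rewrite Hc2, exp_plus.
  replace (/ (2 * PI * sg)) with (/ (sqrt (2 * PI) * sqrt (2 * PI) * sg)) by (rewrite Hq2; auto).
  field. repeat split; lra.
Qed.

Lemma zero_deriv_const f : (forall c, derivable_pt_lim f c 0) -> forall W, f W = f 0.
Proof.
  intros H W. destruct (Rtotal_order W 0) as [Hl|[He|Hg]].
  - destruct (MVT_cor2 f (fun _ => 0) W 0 Hl) as [c [Hc _]]. intros; auto. lra.
  - subst; auto.
  - destruct (MVT_cor2 f (fun _ => 0) 0 W Hg) as [c [Hc _]]. intros; auto. lra.
Qed.

Lemma k0_fk : k0 = fk 0 (Rabs x / Rpower t H2).
Proof. apply functional_extensionality; intro u; unfold k0, fk; simpl; ring. Qed.

Lemma k0_cont : continuity k0.
Proof. rewrite k0_fk; apply fk_cont. Qed.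

Lemma k_pos : 0 < Rabs x / Rpower t H2.
Proof. apply Rdiv_lt_0_compat. apply Rabs_pos_lt; auto. apply Rpower_pos. Qed.

Lemma P_lim : limW (Int k0 0) (K0 (Rabs x / Rpower t H2)).
Proof. rewrite K0_D0 by apply k_pos. rewrite k0_fk. apply D_spec, k_pos. Qed.

Lemma P_odd W : Int k0 0 (- W) = - Int k0 0 W.
Proof.
  assert (H : forall W, Int k0 0 (- W) + Int k0 0 W = Int k0 0 (- 0) + Int k0 0 0).
  { apply (zero_deriv_const (fun W => Int k0 0 (- W) + Int k0 0 W)). intro c.
    eapply D_eqv. apply D_plus. apply (D_comp (fun y => - y) (fun y => Int k0 0 y)).
    apply derivable_pt_lim_opp with (f := fun y => y). apply D_id. apply Int_deriv, k0_cont.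
    apply Int_deriv, k0_cont.
    unfold k0. unfold cosh. rewrite Ropp_involutive. replace ((exp (- c) + exp c) / 2) with ((exp c + exp (- c)) / 2) by lra. ring. }
  specialize (H W). rewrite Ropp_0, Int_aa in H by apply k0_cont. lra.
Qed.

Lemma wf_d s : 0 < s -> derivable_pt_lim wf s (2 * H1 * / s).
Proof.
  intros Hs. unfold wf. eapply D_eqv. apply D_minus. apply (D_scal ln). apply derivable_pt_lim_ln; auto.
  apply D_const. ring.
Qed.

Lemma Phi_d s : 0 < s ->
  derivable_pt_lim (fun s => / (2 * PI * Rpower t H2) * Int k0 0 (wf s)) s (Fexpl s).
Proof.
  intros Hs. unfold Fexpl. apply D_scal. eapply D_eqv.
  apply (D_comp wf (fun y => Int k0 0 y)). apply wf_d; auto. apply Int_deriv, k0_cont. ring.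
Qed.

Lemma Fexpl_cont s : 0 < s -> continuity_pt Fexpl s.
Proof.
  intros Hs. apply derivable_continuous_pt. unfold Fexpl. eexists.
  apply D_scal. apply D_mult. apply (D_comp wf k0). apply wf_d; auto.
  unfold k0. apply expc_d. apply D_scal. apply (D_inv (fun y => y)). apply D_id. lra.
Qed.

Definition Fa (a s : R) := Fexpl ((a + s + Rabs (s - a)) / 2).

Lemma rmax_f a s : a <= s -> (a + s + Rabs (s - a)) / 2 = s.
Proof. intros. rewrite Rabs_right by lra. field. Qed.

Lemma Fa_cont a : 0 < a -> continuity (Fa a).
Proof.
  intros Ha y. unfold Fa.
  assert (Hm : continuity (fun s => (a + s + Rabs (s - a)) / 2)) by reg.
  apply (continuity_pt_comp (fun s => (a + s + Rabs (s - a)) / 2) Fexpl y). apply Hm.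
  apply Fexpl_cont. unfold Rabs; destruct (Rcase_abs (y - a)); lra.
Qed.

Lemma part1 fY : (forall s : R, 0 < s -> derivable_pt_lim (cdf_Y H1 H2 t) s (fY s)) ->
  int_0_inf (fun s => fbm_density H1 s x * fY s) (q H2 x t).
Proof.
  intros HfY.
  assert (HF : forall s, 0 < s -> fbm_density H1 s x * fY s = Fexpl s).
  { intros s Hs. rewrite (uniqueness_limite _ _ _ _ (HfY s Hs) (cdf_deriv H1 H2 t s Hs)).
    unfold fbm_density. apply algebra_i; auto. }
  set (F := fun s => fbm_density H1 s x * fY s).
  set (A' := / (2 * PI * Rpower t H2)).
  set (Phi := fun s => A' * Int k0 0 (wf s)).
  assert (HPI : 0 < PI) by apply PI_RGT_0.
  assert (HA : 0 < A') by (unfold A'; apply Rinv_0_lt_compat; pose proof (Rpower_pos t H2); nra).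
  assert (Hint : forall a b (pr : Riemann_integrable F a b), 0 < a -> a <= b -> RiemannInt pr = Phi b - Phi a).
  { intros a b pr Ha Hab.
    rewrite (RiemannInt_P18 pr (cont_RI (Fa a) a b (Fa_cont a Ha)) Hab).
    rewrite Int_eq. apply FTC; auto. apply Fa_cont; auto.
    intros c Hc. unfold Fa. rewrite rmax_f by lra. apply Phi_d. lra.
    intros y Hy. unfold F, Fa. rewrite rmax_f by lra. apply HF. lra. }
  split.
  { intros a b Ha Hab. constructor.
    refine (@Riemann_integrable_ext (Fa a) F a b _ (cont_RI _ _ _ (Fa_cont a Ha))).
    intros y Hy. rewrite Rmin_left in Hy by lra. rewrite Rmax_right in Hy by lra.
    unfold Fa. rewrite rmax_f by lra. symmetry. apply HF. lra. }
  intros eps He.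
  set (K := K0 (Rabs x / Rpower t H2)).
  set (e' := eps / (2 * A' + 1)).
  assert (He' : 0 < e') by (unfold e'; apply Rdiv_lt_0_compat; lra).
  destruct (P_lim e' He') as [M HM]. fold K in HM.
  set (L0 := ln (Rabs x * Rpower t H2)).
  exists (exp ((- Rabs M + L0) / (2 * H1))). split. apply exp_pos.
  exists (Rmax (exp ((Rabs M + L0) / (2 * H1))) 1). split. pose proof (Rmax_r (exp ((Rabs M + L0) / (2 * H1))) 1); lra.
  intros a b pr Ha Had Hb.
  pose proof (Rmax_l (exp ((Rabs M + L0) / (2 * H1))) 1) as Hb1.
  pose proof (Rmax_r (exp ((Rabs M + L0) / (2 * H1))) 1) as Hb2.
  assert (Hwb : M < wf b).
  { assert (ln (exp ((Rabs M + L0) / (2 * H1))) < ln b) by (apply ln_increasing; [apply exp_pos|lra]).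
    rewrite ln_exp in H. unfold wf. fold L0.
    apply (Rmult_lt_compat_l (2 * H1)) in H; [|lra].
    replace (2 * H1 * ((Rabs M + L0) / (2 * H1))) with (Rabs M + L0) in H by (field; lra).
    pose proof (Rle_abs M). lra. }
  assert (Hwa : M < - wf a).
  { assert (ln a < ln (exp ((- Rabs M + L0) / (2 * H1)))) by (apply ln_increasing; auto).
    rewrite ln_exp in H. unfold wf. fold L0.
    apply (Rmult_lt_compat_l (2 * H1)) in H; [|lra].
    replace (2 * H1 * ((- Rabs M + L0) / (2 * H1))) with (- Rabs M + L0) in H by (field; lra).
    pose proof (Rle_abs M). lra. }
  assert (Hab : a <= b).
  { assert (exp ((- Rabs M + L0) / (2 * H1)) <= exp ((Rabs M + L0) / (2 * H1))).
    apply exp_le. apply Rmult_le_compat_r. left; apply Rinv_0_lt_compat; lra. pose proof (Rabs_pos M); lra.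
    lra. }
  rewrite Hint by auto. unfold Phi.
  rewrite <- (Ropp_involutive (wf a)), P_odd.
  specialize (HM _ Hwb) as H1b. specialize (HM _ Hwa) as H1a.
  assert (Hq : q H2 x t = 2 * A' * K) by (unfold q, A', K; field; pose proof (Rpower_pos t H2); split; lra).
  rewrite Hq.
  replace (A' * Int k0 0 (wf b) - A' * - Int k0 0 (- wf a) - 2 * A' * K)
    with (A' * (Int k0 0 (wf b) - K) + A' * (Int k0 0 (- wf a) - K)) by ring.
  eapply Rle_lt_trans. apply Rabs_triang. rewrite !Rabs_mult, (Rabs_right A') by lra.
  assert (2 * A' * e' < eps).
  { unfold e'. apply (Rmult_lt_reg_r (2 * A' + 1)). lra. field_simplify; lra. }
  nra.
Qed.
End P1.

Theorem mainTheorem16 :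
  forall H1 H2 : R, 0 < H1 < 1 -> 0 < H2 < 1 ->
  (forall t : R, 0 < t ->
     forall fY : R -> R,
       (forall s : R, 0 < s -> derivable_pt_lim (cdf_Y H1 H2 t) s (fY s)) ->
       forall x : R, x <> 0 ->
         int_0_inf (fun s => fbm_density H1 s x * fY s) (q H2 x t)) /\
  (exists qx qxx qxxx qt : R -> R -> R,
     forall x t : R, x <> 0 -> 0 < t ->
       derivable_pt_lim (fun y => q H2 y t) x (qx x t) /\
       derivable_pt_lim (fun y => qx y t) x (qxx x t) /\
       derivable_pt_lim (fun y => qxx y t) x (qxxx x t) /\
       derivable_pt_lim (fun s => q H2 x s) t (qt x t) /\
       qt x t = - H2 * Rpower t (2 * H2 - 1) * (2 * qxx x t + x * qxxx x t)).
Proof.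
  intros H1 H2 HH1 HH2. split.
  - intros t Ht fY HfY x Hx. apply part1; auto. lra.
  - exists (qx H2), (qxx H2), (qxxx H2), (qt H2). apply part2; auto.
Qed.
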